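(* For every $x\in\mathcal X$, as $\mu\ge0$ increases: (1) $\hat p_{C^\mu(x)}(x)$ is non-decreasing; (2) $w(C^\mu(x))\hat p_{C^\mu(x)}(x)$ is non-increasing; (3) $D^\mu(x)$ is non-increasing; (4) $w(C^\mu(x))\hat p_{C^\mu(x)}(x)D^\mu(x)$ is non-increasing; (5) $(1-\hat p_{C^\mu(x)}(x)-\alpha)D^\mu(x)$ is non-increasing.
   Context: Let $\alpha\in(0,1)$. $\mathcal I$ is a finite collection of subsets of $\mathcal Y$ enumerated in a fixed lexicographic order, and $w:\mathcal I\to(0,B)$ a bounded positive weight. For $x\in\mathcal X$, $C\in\mathcal I$, $\hat p_C(x)\in[0,1]$ is a fixed estimate of $\mathbb P(Y\in C\mid X=x)$. For $\mu\ge0$ let $\hat\ell_{x,C}(\mu)=w(C)\hat p_C(x)+\mu(\hat p_C(x)-(1-\alpha))$. $C^\mu(x)$ is a maximizer of $\hat\ell_{x,C}(\mu)$ over $C\in\mathcal I$, ties broken in favor of the smallest weight $w(C)$ and then the smallest index; $D^\mu(x)=\mathbb 1\{\max_{C\in\mathcal I}\hat\ell_{x,C}(\mu)>0\}$. *)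

(* Defs.v *)
From mathcomp Require Import all_boot all_order all_algebra.
Set Implicit Arguments. Unset Strict Implicit. Unset Printing Implicit Defensive.
Import Order.TTheory GRing.Theory Num.Theory.
Local Open Scope ring_scope.

Section Defs.
Variables (R : realFieldType) (X : Type) (n : nat).
(* The collection I is enumerated (in its fixed lexicographic order) as 'I_n.+1;
   index order = enumeration order. *)
Variables (alpha : R) (w : 'I_n.+1 -> R) (phat : X -> 'I_n.+1 -> R).

Definition ell (x : X) (C : 'I_n.+1) (mu : R) : R :=
  w C * phat x C + mu * (phat x C - (1 - alpha)).

Definition selected (mu : R) (x : X) (C : 'I_n.+1) : bool :=
  [forall C' : 'I_n.+1,
     (ell x C' mu < ell x C mu) ||
     ((ell x C' mu == ell x C mu) &&
      ((w C < w C') || ((w C == w C') && (C <= C')%N)))].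

(* C^mu(x) : the (unique) selected set; default ord0 never used. *)
Definition Cmu (mu : R) (x : X) : 'I_n.+1 :=
  odflt ord0 [pick C | selected mu x C].

Definition maxell (mu : R) (x : X) : R :=
  \big[Num.max/ell x ord0 mu]_(C < n.+1) ell x C mu.

Definition Dmu (mu : R) (x : X) : R := if 0 < maxell mu x then 1 else 0.
End Defs.

(* Main.v *)
Require Import Defs.
From mathcomp Require Import all_boot all_order all_algebra.
From mathcomp Require Import lra.
Import Order.TTheory GRing.Theory Num.Theory.
Local Open Scope ring_scope.

Section S.
Variable R : realFieldType.
Definition lexr (a p : R) (i : nat) (b q : R) (j : nat) :=
  (b < a) || ((b == a) && ((p < q) || ((p == q) && (i <= j)%N))).

Lemma lexr_trans a p i b q j c s k :
  lexr a p i b q j -> lexr b q j c s k -> lexr a p i c s k.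
Proof.
rewrite /lexr.
move=> /orP[h1|/andP[/eqP e1 h1]] /orP[h2|/andP[/eqP e2 h2]].
- by rewrite (lt_trans h2 h1).
- by rewrite e2 h1.
- by rewrite -e1 h2.
- subst; rewrite eqxx ltxx /=.
  move: h1 h2 => /orP[h1|/andP[/eqP e1 h1]] /orP[h2|/andP[/eqP e2 h2]].
  + by rewrite (lt_trans h1 h2).
  + by rewrite -e2 h1.
  + by rewrite e1 h2.
  + by rewrite e1 e2 eqxx (leq_trans h1 h2) orbT.
Qed.

Lemma lexr_total a p i b q j : lexr a p i b q j || lexr b q j a p i.
Proof.
rewrite /lexr.
case: (ltgtP b a) => [h|h|h] //=.
case: (ltgtP p q) => [h2|h2|h2] //=.
by rewrite leq_total.
Qed.

Lemma lexr_refl a p i : lexr a p i a p i.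
Proof. by rewrite /lexr !eqxx !ltxx leqnn. Qed.

Lemma exists_best (T : eqType) (r : rel T) (s : seq T) x0 :
  (forall x, r x x) -> (forall x y z, r x y -> r y z -> r x z) ->
  (forall x y, r x y || r y x) ->
  exists c, (c \in x0 :: s) && all (r c) (x0 :: s).
Proof.
move=> rr rt rtot; elim: s x0 => [|y s ih] x0.
  by exists x0; rewrite inE eqxx /= rr.
have [c /andP[cin call]] := ih y.
case/orP: (rtot c x0) => h.
  exists c; rewrite inE cin orbT /= h /=; exact: call.
exists x0; rewrite inE eqxx /= rr /=; change (all (r x0) (y :: s)).
apply/allP => z zin; apply: rt h _; exact: (allP call).
Qed.
End S.
Lemma Cmu_sel {R : realFieldType} {X : Type} {n : nat} (alpha : R)
  (w : 'I_n.+1 -> R) (phat : X -> 'I_n.+1 -> R) mu x :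
  selected alpha w phat mu x (Cmu alpha w phat mu x).
Proof.
rewrite /Cmu; case: pickP => [C hC|hnone] //=; exfalso.
have [c /andP[_ call]] := @exists_best 'I_n.+1
  (fun C C' => @lexr R (ell alpha w phat x C mu) (w C) C
                    (ell alpha w phat x C' mu) (w C') C') (enum 'I_n.+1) ord0
  (fun a => @lexr_refl R _ _ _)
  (fun a b c => @lexr_trans R _ _ _ _ _ _ _ _ _)
  (fun a b => @lexr_total R _ _ _ _ _ _).
move: (hnone c); rewrite /selected.
have -> : [forall C', @lexr R (ell alpha w phat x c mu) (w c) c
                    (ell alpha w phat x C' mu) (w C') C'] by
  apply/forallP => C'; apply: (allP call); rewrite inE mem_enum orbT.
by [].
Qed.

Lemma sel_max {R : realFieldType} {X : Type} {n : nat} {alpha : R}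
  {w : 'I_n.+1 -> R} {phat : X -> 'I_n.+1 -> R} {mu x C} :
  selected alpha w phat mu x C ->
  forall C', ell alpha w phat x C' mu <= ell alpha w phat x C mu.
Proof.
move=> /forallP h C'; case/orP: (h C') => [/ltW //|/andP[/eqP -> _]].
exact: lexx.
Qed.

Lemma maxell_eq {R : realFieldType} {X : Type} {n : nat} {alpha : R}
  {w : 'I_n.+1 -> R} {phat : X -> 'I_n.+1 -> R} {mu x C} :
  selected alpha w phat mu x C ->
  maxell alpha w phat mu x = ell alpha w phat x C mu.
Proof.
move=> hs; apply/le_anti/andP; split.
  apply: bigmax_le; first exact: sel_max hs ord0.
  move=> i _; exact: sel_max hs i.
exact: le_bigmax.
Qed.

Theorem proposition9 (R : realFieldType) (X : Type) (n : nat) (alpha B : R)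
  (w : 'I_n.+1 -> R) (phat : X -> 'I_n.+1 -> R)
  (halpha : 0 < alpha < 1)
  (hw : forall C, 0 < w C < B)
  (hp : forall x C, 0 <= phat x C <= 1) :
  forall (x : X) (mu1 mu2 : R), 0 <= mu1 -> mu1 <= mu2 ->
    let C1 := Cmu alpha w phat mu1 x in
    let C2 := Cmu alpha w phat mu2 x in
    let D1 := Dmu alpha w phat mu1 x in
    let D2 := Dmu alpha w phat mu2 x in
    [/\ phat x C1 <= phat x C2,
        w C2 * phat x C2 <= w C1 * phat x C1,
        D2 <= D1,
        w C2 * phat x C2 * D2 <= w C1 * phat x C1 * D1
      & (1 - phat x C2 - alpha) * D2 <= (1 - phat x C1 - alpha) * D1].
Proof.
move=> x mu1 mu2 hmu1 hmu12 C1 C2 D1 D2.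
case: (eqVneq mu1 mu2) => [e|ne].
  by rewrite /C2 /D2 -e; split; exact: lexx.
have lt12 : mu1 < mu2 by rewrite lt_neqAle ne.
have s1 := Cmu_sel alpha w phat mu1 x.
have s2 := Cmu_sel alpha w phat mu2 x.
have h1 := sel_max s1 C2.
have h2 := sel_max s2 C1.
rewrite /D1 /D2 /Dmu (maxell_eq s1) (maxell_eq s2).
rewrite -/C1 -/C2 in h1 h2 *.
move: h1 h2; rewrite /ell.
have := hp x C1; have := hp x C2; have := hw C1; have := hw C2.
move: halpha.
set p1 := phat x C1; set p2 := phat x C2; set w1 := w C1; set w2 := w C2.
move=> /andP[ha0 ha1] /andP[hw2 _] /andP[hw1 _] /andP[hp20 hp21] /andP[hp10 hp11] h1 h2.
have hp12 : p1 <= p2.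
  have : 0 <= (mu2 - mu1) * (p2 - p1) by nra.
  by rewrite pmulr_rge0 ?subr_gt0 // subr_ge0.
have hwp : w2 * p2 <= w1 * p1 by nra.
have key : 0 < w2 * p2 + mu2 * (p2 - (1 - alpha)) ->
           0 < w1 * p1 + mu1 * (p1 - (1 - alpha)).
  move=> hpos; suff : 0 < w2 * p2 + mu1 * (p2 - (1 - alpha)) by lra.
  case: (leP (p2 - (1 - alpha)) 0) => hb; first by nra.
  have : 0 < w2 * p2 by apply: mulr_gt0 => //; lra.
  nra.
case: ifP => hd2; case: ifP => hd1; rewrite ?mulr1 ?mulr0.
- split => //; rewrite ?lexx //; lra.
- by move: (key hd2); rewrite hd1.
- split => //; rewrite ?ler01 ?lexx //.
    by apply: mulr_ge0; lra.
  have : (mu2 - mu1) * (p1 - (1 - alpha)) < 0 by move: hd2 => /negbT; rewrite -leNgt; nra.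
  rewrite pmulr_rlt0 ?subr_gt0 //; lra.
- by split => //; rewrite lexx.
Qed.
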